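(* Let $D$ be an acyclic digraph, let $G$ be an induced subgraph of $P(D)$, and let $H$ be a subgraph of $G$ such that (i) every maximal clique of $H$ is also a maximal clique of $G$; (ii) any maximal clique of $G$ belonging to $H$ and any maximal clique of $G$ not belonging to $H$ share at most one vertex. Let $$X=\{x \in V(H) \cup (V(D)\setminus V(G)) : N_D^-[x] \cap V(H) \text{ is a clique of size at least two in } H\},$$ and let $D^*$ be the digraph with vertex set $V(D^* ) = V(H) \cup (V(D)\setminus V(G))$ and arc set $$A(D^* )=\bigcup_{x \in X} \left[N_D^-[x] \cap V(H),\{x\}\right]_D .$$ Then $P(D^* )$ contains $H$ as an induced subgraph.
   Context: All graphs are finite and simple. For an acyclic digraph $D$, the phylogeny graph $P(D)$ is the graph on $V(D)$ in which distinct vertices $u,v$ are adjacent if and only if $(u,v)\in A(D)$, or $(v,u)\in A(D)$, or there is a vertex $w$ with $(u,w),(v,w)\in A(D)$. For a vertex $x$ of a digraph $D$, $N_D^-[x]$ denotes the closed in-neighborhood $\{x\}\cup\{u : (u,x)\in A(D)\}$. For vertex sets $U,V$ of $D$, $[U,V]_D$ denotes the set of arcs of $D$ with tail in $U$ and head in $V$. A clique of $G$ ''belongs to $H$'' if it is a clique of $H$ (all its vertices are in $V(H)$ and all edges among them are in $E(H)$). *)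

(* Defs.v *)
From mathcomp Require Import all_boot.
Set Implicit Arguments. Unset Strict Implicit. Unset Printing Implicit Defensive.

Section Defs.
Variable T : finType.

(* A digraph is a vertex set V : {set T} with an arc relation a : rel T
   (arcs are pairs (u,v) with a u v). Acyclic: no directed cycle, i.e. for
   every arc (x,y), x is not reachable from y (this also excludes loops). *)
Definition acyclic (a : rel T) : Prop :=
  forall x y, a x y -> ~~ connect a y x.

Definition phylo_adj (V : {set T}) (a : rel T) (u v : T) : bool :=
  (u != v) && [|| a u v, a v u | [exists w in V, a u w && a v w]].

Definition is_clique (V : {set T}) (e : rel T) (S : {set T}) : bool :=
  (S \subset V) && [forall x in S, forall y in S, (x != y) ==> e x y].

Definition is_maxclique (V : {set T}) (e : rel T) (S : {set T}) : bool :=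
  is_clique V e S &&
  [forall S' : {set T}, (is_clique V e S' && (S \subset S')) ==> (S' == S)].

Definition in_nbhd_closed (a : rel T) (x : T) : {set T} :=
  x |: [set u | a u x].

End Defs.

(* Main.v *)
Require Import Defs.
From mathcomp Require Import all_boot.
Set Implicit Arguments. Unset Strict Implicit.
Section H.
Variable T : finType.

Lemma clique_ext (V : {set T}) (e : rel T) (S : {set T}) : is_clique V e S ->
  exists2 K, is_maxclique V e K & S \subset K.
Proof.
move=> cS.
have P0 : is_clique V e S && (S \subset S) by rewrite cS subxx.
case: (@arg_maxnP _ S (fun K => is_clique V e K && (S \subset K)) (fun K => #|K|) P0).
move=> K /andP[cK sSK] Kmax; exists K => //.
rewrite /is_maxclique cK /=; apply/forallP => K'; apply/implyP => /andP[cK' sKK'].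
have := Kmax K'; rewrite cK' (subset_trans sSK sKK') => /(_ isT) le.
by rewrite eq_sym eqEcard sKK' /=; exact: le.
Qed.

Lemma clique_sub (V : {set T}) (e : rel T) (S S' : {set T}) : is_clique V e S -> S' \subset S -> is_clique V e S'.
Proof.
move=> /andP[sSV /forallP cl] sS'.
rewrite /is_clique (subset_trans sS' sSV) /=.
apply/forallP => x; apply/implyP => xS; apply/forallP => y; apply/implyP => yS.
by have /implyP := cl x => /(_ (subsetP sS' _ xS)) /forallP /(_ y) /implyP /(_ (subsetP sS' _ yS)).
Qed.

Lemma clique_in (V : {set T}) (e : rel T) (S : {set T}) x y : is_clique V e S -> x \in S -> y \in S -> x != y -> e x y.
Proof.
move=> /andP[_ /forallP cl] xS yS; have /implyP := cl x => /(_ xS) /forallP /(_ y) /implyP /(_ yS).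
by move/implyP.
Qed.
End H.
Theorem mainTheorem1 (T : finType) (a : rel T) (VG VH : {set T}) (eH : rel T) :
  acyclic a ->
  VH \subset VG ->
  (forall u v, eH u v = eH v u) ->
  (forall u v, eH u v ->
     [&& u \in VH, v \in VH & phylo_adj setT a u v]) ->
  (* (i) *)
  (forall K, is_maxclique VH eH K -> is_maxclique VG (phylo_adj setT a) K) ->
  (* (ii) *)
  (forall K K', is_maxclique VG (phylo_adj setT a) K -> is_clique VH eH K ->
     is_maxclique VG (phylo_adj setT a) K' -> ~~ is_clique VH eH K' ->
     #|K :&: K'| <= 1) ->
  let Vstar := VH :|: ~: VG in
  let X := [set x in Vstar |
             is_clique VH eH (in_nbhd_closed a x :&: VH) &&
             (2 <= #|in_nbhd_closed a x :&: VH|)] in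
  let Astar : rel T := fun u x =>
             [&& x \in X, u \in in_nbhd_closed a x :&: VH & a u x] in
  forall u v, u \in VH -> v \in VH -> phylo_adj Vstar Astar u v = eH u v.
Proof.
move=> _ sHG eHs eHP hi hii Vstar X Astar u v uH vH.
have key : forall w, eH u v -> u \in in_nbhd_closed a w -> v \in in_nbhd_closed a w -> w \in X.
  move=> w euv uw vw.
  have /and3P[_ _ /andP[uv _]] := eHP _ _ euv.
  have cuv : is_clique VH eH [set u; v].
    rewrite /is_clique; apply/andP; split.
      by apply/subsetP => x; rewrite !inE => /orP[] /eqP->.
    apply/forallP => x; apply/implyP; rewrite !inE => hx.
    apply/forallP => y; apply/implyP; rewrite !inE => hy; apply/implyP => nxy.
    case/orP: hx => /eqP ex; case/orP: hy => /eqP ey; subst x y;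
    first [by rewrite eqxx in nxy | done | by rewrite eHs].
  have [K mK sK] := clique_ext cuv.
  have cN : is_clique VG (phylo_adj setT a) (in_nbhd_closed a w :&: VG).
    rewrite /is_clique subsetIr /=.
    apply/forallP => x; apply/implyP; rewrite !inE => /andP[hx _].
    apply/forallP => y; apply/implyP; rewrite !inE => /andP[hy _]; apply/implyP => nxy.
    rewrite /phylo_adj nxy /=.
    case/orP: hx => [/eqP ex | ax].
      case/orP: hy => [/eqP ey | ay]; first by rewrite ex ey eqxx in nxy.
      by rewrite ex ay orbT.
    case/orP: hy => [/eqP ey | ay]; first by rewrite ey ax.
    by apply/orP; right; apply/orP; right; apply/existsP; exists w; rewrite inE ax ay.
  have [K' mK' sK'] := clique_ext cN.
  have cK' : is_clique VH eH K'.
    apply/negPn/negP => ncK'.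
    have := hii _ _ (hi _ mK) (proj1 (andP mK)) mK' ncK'.
    have s2 : [set u; v] \subset K :&: K'.
      rewrite subsetI sK /=; apply/subsetP => x; rewrite !inE => /orP[] /eqP ->;
      apply: (subsetP sK'); rewrite inE ?uw ?vw /=; apply: (subsetP sHG) => //.
    have := subset_leq_card s2; rewrite cards2 uv.
    by move=> h1 h2; have := leq_trans h1 h2.
  have sNK : in_nbhd_closed a w :&: VH \subset K'.
    apply: subset_trans sK'; apply/subsetP => x; rewrite !inE => /andP[-> /=].
    exact: (subsetP sHG).
  rewrite inE; apply/andP; split.
    rewrite /Vstar !inE; case: (boolP (w \in VG)) => wG; last by rewrite orbT.
    apply/orP; left; apply: (subsetP (proj1 (andP cK'))); apply: (subsetP sK').
    by rewrite !inE eqxx.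
  rewrite (clique_sub cK' sNK) /=.
  have s2 : [set u; v] \subset in_nbhd_closed a w :&: VH.
    by apply/subsetP => x; rewrite in_set2 => /orP[] /eqP ->; rewrite inE ?uw ?vw ?uH ?vH.
  by have := subset_leq_card s2; rewrite cards2 uv.
apply/idP/idP.
  rewrite /phylo_adj => /andP[nuv /or3P[]].
  - rewrite /Astar => /and3P[vX]; rewrite inE => /andP[uN _] _.
    move: vX; rewrite inE => /andP[_ /andP[cl _]].
    apply: (clique_in cl) => //; first by rewrite inE uN uH.
    by rewrite /in_nbhd_closed !inE eqxx vH.
  - rewrite /Astar => /and3P[uX]; rewrite inE => /andP[vN _] _.
    move: uX; rewrite inE => /andP[_ /andP[cl _]].
    apply: (clique_in cl) => //; last by rewrite inE vN vH.
    by rewrite /in_nbhd_closed !inE eqxx uH.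
  - case/existsP => w /andP[_ /andP[/and3P[wX]]]; rewrite inE => /andP[uN _] _.
    case/and3P => _; rewrite inE => /andP[vN _] _.
    move: wX; rewrite inE => /andP[_ /andP[cl _]].
    by apply: (clique_in cl) => //; rewrite inE ?uN ?vN ?uH ?vH.
move=> euv; have /and3P[_ _ pa] := eHP _ _ euv.
case/andP: pa => nuv /or3P[] h; rewrite /phylo_adj nuv /=.
- have vX : v \in X by apply: key; rewrite // /in_nbhd_closed !inE ?eqxx ?h ?orbT.
  apply/orP; left; rewrite /Astar h vX andbT inE /in_nbhd_closed !inE h orbT uH.
  done.
- have uX : u \in X by apply: key; rewrite // /in_nbhd_closed !inE ?eqxx ?h ?orbT.
  apply/orP; right; apply/orP; left; rewrite /Astar h uX andbT inE /in_nbhd_closed !inE h orbT vH.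
  done.
- case/existsP: h => w /andP[_ /andP[uw vw]].
  have wX : w \in X by apply: key; rewrite // /in_nbhd_closed !inE ?uw ?vw ?orbT.
  apply/orP; right; apply/orP; right; apply/existsP; exists w.
  have := wX; rewrite inE => /andP[-> _] /=.
  by rewrite /Astar wX uw vw /in_nbhd_closed !inE uw vw uH vH !orbT.
Qed.
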